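(* For every $N\in\mathbb N$, every $j_0\in\mathbb Z^d$ and every $(\varepsilon,\lambda)\in[0,\varepsilon_0]\times\Lambda$, setting $\mathtt M:=|B^0_{2,N}(j_0;\varepsilon,\lambda)|$, one has $B^0_N(j_0;\varepsilon,\lambda)\subset\bigcup_{q=1}^{2\mathtt MN^\tau}I_q$ where the $I_q$ are intervals with $|I_q|\leq N^{-\tau}$.
   Context: Setting. $d,\nu\geq1$; $|l|,|j|$ max norms, $\|j\|^2=\sum j_i^2$. $\bar\omega\in\mathbb R^\nu$, $|\bar\omega|\leq1$; $\Lambda=[1/2,3/2]$; $\tau>0$ a parameter; $\varepsilon_0>0$. $V\in C^r(\mathbb T^d;\mathbb R)$, $m$ its average, $V_0=V-m$. $f\in C^r(\mathbb T^\nu\times\mathbb T^d\times\mathbb R;\mathbb R)$, $(\varepsilon,\lambda)\mapsto u^+(\varepsilon,\lambda)\in H^s(\mathbb T^{\nu}\times\mathbb T^d;\mathbb C)$ ($s>(d+\nu)/2$), $p=f(\cdot,|u^+|^2)+f'(\cdot,|u^+|^2)|u^+|^2$, $q=f'(\cdot,|u^+|^2)(u^+)^2$ ($f'$ = derivative in the last variable). $T_1$ is the matrix of multiplication by $\begin{pmatrix}p&q\\\bar q&p\end{pmatrix}$ in the Fourier basis $e_{(l,j),a}$ ($a\in\{0,1\}$ labels the component). With $\omega=\lambda\bar\omega$, $A(\varepsilon,\lambda,\theta)=D+T_2-\varepsilon T_1+\theta Y$ (indexed by $(l,j,a)$), where $D$ is diagonal with entries $-\omega\cdot l+\|j\|^2+m$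 ($a=0$), $\omega\cdot l+\|j\|^2+m$ ($a=1$), $Y$ diagonal with entries $-1$ ($a=0$), $+1$ ($a=1$), and $T_2$ the matrix of multiplication by $V_0$ in each component. $A_{N,j_0}(\varepsilon,\lambda,\theta)$ is the (self-adjoint) restriction of $A$ to indices with $|l|\leq N$, $|j-j_0|\leq N$; $\|\cdot\|_0$ is the $L^2$ operator norm ($=+\infty$ for the inverse of a non-invertible matrix). $B^0_N(j_0;\varepsilon,\lambda):=\{\theta\in\mathbb R:\|A_{N,j_0}^{-1}(\varepsilon,\lambda,\theta)\|_0>N^\tau\}$ and $B^0_{2,N}(j_0;\varepsilon,\lambda):=\{\theta\in\mathbb R:\|A_{N,j_0}^{-1}(\varepsilon,\lambda,\theta)\|_0>N^\tau/2\}$; $|\cdot|$ denotes Lebesgue measure. *)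

(* Defs.v *)
From mathcomp Require Import all_boot all_order all_algebra.
From mathcomp Require Import all_classical all_reals all_analysis.
From mathcomp Require Export complex.
Set Implicit Arguments. Unset Strict Implicit. Unset Printing Implicit Defensive.
Import Order.TTheory GRing.Theory Num.Theory.
Local Open Scope ring_scope.

Section Defs.
Variable R : realType.
Local Notation C := R[i].

Definition vnorm n (x : 'cV[C]_n) : R :=
  Num.sqrt (\sum_i ((complex.Re (x i 0)) ^+ 2 + (complex.Im (x i 0)) ^+ 2)).

Definition opnorm n (B : 'M[C]_n) : \bar R :=
  ereal_sup [set (vnorm (B *m x))%:E | x in [set x : 'cV[C]_n | vnorm x = 1]].

Definition invnorm n (A : 'M[C]_n) : \bar R :=
  if A \in unitmx then opnorm (invmx A) else +oo%E.

(** Finite index set { (l, j, a) : |l| <= N, |j - j0| <= N, a in {0,1} },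
    encoded by ordinals: coordinate x : 'I_(2N+1) stands for x - N. The
    boolean a stands for the component label (false = 0, true = 1). *)
Definition Idx (nu d N : nat) : finType :=
  ({ffun 'I_nu -> 'I_(N.*2.+1)} * {ffun 'I_d -> 'I_(N.*2.+1)} * bool)%type.

Definition shift_vec k N (x : {ffun 'I_k -> 'I_(N.*2.+1)}) : 'rV[int]_k :=
  \row_i ((x i : nat)%:Z - N%:Z).

Definition idx_l nu d N (k : Idx nu d N) : 'rV[int]_nu := shift_vec k.1.1.
Definition idx_j nu d N (j0 : 'rV[int]_d) (k : Idx nu d N) : 'rV[int]_d :=
  j0 + shift_vec k.1.2.
Definition idx_a nu d N (k : Idx nu d N) : bool := k.2.

Definition dotl nu (om : 'rV[R]_nu) (l : 'rV[int]_nu) : R :=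
  \sum_i om 0 i * (l 0 i)%:~R.
Definition sqnorm d (j : 'rV[int]_d) : R := (\sum_i (j 0 i) ^+ 2)%:~R.

(** Entry ((l,j,a),(l',j',a')) of
      A(eps,lambda,theta) = D + T_2 - eps T_1 + theta Y
    where
    - D diagonal: -omega.l + ||j||^2 + m (a = 0), omega.l + ||j||^2 + m (a = 1),
      omega = lambda * omegabar;
    - Y diagonal: -1 (a = 0), +1 (a = 1);
    - T_2 = multiplication by V_0 in each component:
        delta_{a a'} delta_{l l'} V0hat (j - j');
    - T_1 = multiplication by [[p, q], [conj q, p]]:
        a=a'     : phat (l - l', j - j'),
        (0,1)    : qhat (l - l', j - j'),
        (1,0)    : (conj q)hat (l - l', j - j') = conj (qhat (l' - l, j' - j)).
    V0hat : Fourier coefficients of V_0 = V - m on T^d;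
    phat, qhat eps lambda : Fourier coefficients of p, q on T^nu x T^d
    (which depend on (eps, lambda) through u^+(eps, lambda)). *)
Definition A_entry nu d (m : R) (omegabar : 'rV[R]_nu)
    (V0hat : 'rV[int]_d -> C)
    (phat qhat : R -> R -> 'rV[int]_nu -> 'rV[int]_d -> C)
    (eps lam theta : R) (N : nat) (j0 : 'rV[int]_d) (k k' : Idx nu d N) : C :=
  let l := idx_l k in let l' := idx_l k' in
  let j := idx_j j0 k in let j' := idx_j j0 k' in
  let a := idx_a k in let a' := idx_a k' in
  let om := lam *: omegabar in
  let Dk : R := (if a then dotl om l else - dotl om l) + sqnorm j + m in
  let Yk : R := if a then 1 else -1 in
  let diag : C := if k == k' then ((Dk + theta * Yk)%:C)%C else 0 in
  let T2 : C := if (a == a') && (l == l') then V0hat (j - j') else 0 in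
  let T1 : C :=
    match a, a' with
    | false, false | true, true => phat eps lam (l - l') (j - j')
    | false, true => qhat eps lam (l - l') (j - j')
    | true, false => (qhat eps lam (l' - l) (j' - j))^*
    end in
  diag + T2 - (eps%:C)%C * T1.

Definition A_trunc nu d (m : R) (omegabar : 'rV[R]_nu)
    (V0hat : 'rV[int]_d -> C)
    (phat qhat : R -> R -> 'rV[int]_nu -> 'rV[int]_d -> C)
    (eps lam theta : R) (N : nat) (j0 : 'rV[int]_d) : 'M[C]_#|{: Idx nu d N}| :=
  \matrix_(i, i') A_entry m omegabar V0hat phat qhat eps lam theta j0
                   (enum_val i) (enum_val i').

Definition B0 nu d (m : R) (omegabar : 'rV[R]_nu)
    (V0hat : 'rV[int]_d -> C)
    (phat qhat : R -> R -> 'rV[int]_nu -> 'rV[int]_d -> C)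
    (tau : R) (N : nat) (j0 : 'rV[int]_d) (eps lam : R) : set R :=
  [set theta | ((N%:R `^ tau)%:E <
     invnorm (A_trunc m omegabar V0hat phat qhat eps lam theta N j0))%E].

Definition B0_2 nu d (m : R) (omegabar : 'rV[R]_nu)
    (V0hat : 'rV[int]_d -> C)
    (phat qhat : R -> R -> 'rV[int]_nu -> 'rV[int]_d -> C)
    (tau : R) (N : nat) (j0 : 'rV[int]_d) (eps lam : R) : set R :=
  [set theta | ((N%:R `^ tau / 2)%:E <
     invnorm (A_trunc m omegabar V0hat phat qhat eps lam theta N j0))%E].

End Defs.

(* Main.v *)
Require Import Defs.
From mathcomp Require Import all_boot all_order all_algebra.
From mathcomp Require Import all_classical all_reals all_analysis.
From mathcomp Require Import complex.
From mathcomp Require Import ring lra.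
Import Order.TTheory GRing.Theory Num.Theory.
Local Open Scope ring_scope.
Set Implicit Arguments.

Section VN.
Context {R : realType}.
Local Notation C := R[i].

Lemma ReD (x y : C) : complex.Re (x + y) = complex.Re x + complex.Re y.
Proof. by case: x; case: y. Qed.
Lemma ImD (x y : C) : complex.Im (x + y) = complex.Im x + complex.Im y.
Proof. by case: x; case: y. Qed.
Lemma ReM (x y : C) : complex.Re (x * y) = complex.Re x * complex.Re y - complex.Im x * complex.Im y.
Proof. by case: x; case: y. Qed.
Lemma ImM (x y : C) : complex.Im (x * y) = complex.Re x * complex.Im y + complex.Im x * complex.Re y.
Proof. by case: x => a b; case: y => c e /=. Qed.

Definition sqc (z : C) : R := complex.Re z ^+ 2 + complex.Im z ^+ 2.
Lemma sqc_ge0 z : 0 <= sqc z.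
Proof. by rewrite /sqc addr_ge0 // sqr_ge0. Qed.
Lemma sqcM x y : sqc (x * y) = sqc x * sqc y.
Proof. rewrite /sqc ReM ImM; ring. Qed.
Lemma sqcR (r : R) : sqc (r%:C)%C = r ^+ 2.
Proof. by rewrite /sqc /=; rewrite expr0n /= addr0. Qed.
Lemma sqc_eq0 z : sqc z = 0 -> z = 0.
Proof.
case: z => a b; rewrite /sqc /= => H.
have Ha : a ^+ 2 = 0 by apply/eqP; rewrite eq_le sqr_ge0 andbT -H lerDl sqr_ge0.
have Hb : b ^+ 2 = 0 by move: H; rewrite Ha add0r.
move/eqP: Ha; rewrite sqrf_eq0 => /eqP->; move/eqP: Hb; rewrite sqrf_eq0 => /eqP->.
by [].
Qed.

Context {n : nat}.
Implicit Types x y : 'cV[C]_n.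

Definition nsq x : R := \sum_i sqc (x i 0).
Definition dotc x y : R := \sum_i (complex.Re (x i 0) * complex.Re (y i 0) + complex.Im (x i 0) * complex.Im (y i 0)).

Lemma vnormE x : vnorm x = Num.sqrt (nsq x).
Proof. by []. Qed.
Lemma nsq_ge0 x : 0 <= nsq x.
Proof. by apply: sumr_ge0 => i _; apply: sqc_ge0. Qed.
Lemma vnorm_ge0 x : 0 <= vnorm x.
Proof. exact: sqrtr_ge0. Qed.

Lemma nsqD x y : nsq (x + y) = nsq x + 2 * dotc x y + nsq y.
Proof.
rewrite /nsq /dotc mulr_sumr -!big_split /=; apply: eq_bigr => i _.
rewrite mxE /sqc ReD ImD; ring.
Qed.

Lemma nsqZ c x : nsq (c *: x) = sqc c * nsq x.
Proof. rewrite /nsq mulr_sumr; apply: eq_bigr => i _; by rewrite mxE sqcM. Qed.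

Lemma vnormZ c x : vnorm (c *: x) = Num.sqrt (sqc c) * vnorm x.
Proof. by rewrite !vnormE nsqZ sqrtrM // sqc_ge0. Qed.

Lemma vnormZR (r : R) x : vnorm ((r%:C)%C *: x) = `|r| * vnorm x.
Proof. by rewrite vnormZ sqcR sqrtr_sqr. Qed.

Lemma vnorm0 : vnorm (0 : 'cV[C]_n) = 0.
Proof.
rewrite vnormE /nsq big1 ?sqrtr0 // => i _; rewrite mxE /sqc /=.
by rewrite expr0n /= addr0.
Qed.

Lemma vnorm_eq0 x : vnorm x = 0 -> x = 0.
Proof.
rewrite vnormE => /eqP; rewrite sqrtr_eq0 => H.
have H0 : nsq x = 0 by apply/eqP; rewrite eq_le H nsq_ge0.
apply/matrixP => i j; rewrite ord1 mxE; apply: sqc_eq0.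
exact: (psumr_eq0P (fun i _ => sqc_ge0 _) H0).
Qed.

Lemma CS x y : dotc x y <= Num.sqrt (nsq x) * Num.sqrt (nsq y).
Proof.
set U := nsq x; set V := nsq y; set S := dotc x y.
have key : forall t : R, 0 <= U + 2 * t * S + t ^+ 2 * V.
  move=> t; have := nsq_ge0 (x + (t%:C)%C *: y).
  rewrite nsqD nsqZ sqcR.
  have -> : dotc x ((t%:C)%C *: y) = t * S.
    rewrite /S /dotc mulr_sumr; apply: eq_bigr => i _; rewrite mxE ReM ImM /=; ring.
  by rewrite mulrA.
have S2 : S ^+ 2 <= U * V.
  have [V0|Vn0] := eqVneq V 0.
    rewrite V0 mulr0; have [S0|Sn0] := eqVneq S 0; first by rewrite S0 expr0n.
    have := key (- (U + 1) / (2 * S)); rewrite V0 mulr0 addr0.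
    have -> : U + 2 * (- (U + 1) / (2 * S)) * S = -1.
      field. done.
    by rewrite lerNr oppr0 ler10.
  have Vp : 0 < V by rewrite lt_def Vn0 nsq_ge0.
  have := key (- S / V).
  have -> : U + 2 * (- S / V) * S + (- S / V) ^+ 2 * V = (U * V - S ^+ 2) / V by field.
  by rewrite pmulr_lge0 ?invr_gt0 // subr_ge0.
apply: le_trans (ler_norm S) _.
by rewrite -sqrtr_sqr -sqrtrM ?nsq_ge0 // ler_sqrt // mulr_ge0 // nsq_ge0.
Qed.

Lemma vnormD x y : vnorm (x + y) <= vnorm x + vnorm y.
Proof.
rewrite -(ler_sqr (x:=vnorm (x+y))) ?nnegrE ?addr_ge0 ?vnorm_ge0 //.
rewrite !vnormE sqr_sqrtr ?nsq_ge0 // nsqD sqrrD !sqr_sqrtr ?nsq_ge0 //.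
rewrite lerD2r lerD2l.
apply: le_trans (_ : 2 * (Num.sqrt (nsq x) * Num.sqrt (nsq y)) <= _).
  by apply: ler_wpM2l => //; exact: CS.
by rewrite mulr_natl.
Qed.


Lemma vnormN x : vnorm (- x) = vnorm x.
Proof.
rewrite !vnormE /nsq; congr (Num.sqrt _); apply: eq_bigr => i _.
by rewrite mxE; case: (x i 0) => a b; rewrite /sqc /= !sqrrN.
Qed.

Lemma vnormB x y : vnorm (x - y) <= vnorm x + vnorm y.
Proof. by rewrite -(vnormN y); apply: vnormD. Qed.

Lemma vnorm_sum (I : Type) (r : seq I) (F : I -> 'cV[C]_n) :
  vnorm (\sum_(i <- r) F i) <= \sum_(i <- r) vnorm (F i).
Proof.
elim: r => [|a r IH]; first by rewrite !big_nil vnorm0.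
rewrite !big_cons; apply: le_trans (vnormD _ _) _; exact: lerD.
Qed.

Lemma sqc_le_nsq x j : sqc (x j 0) <= nsq x.
Proof.
rewrite /nsq (bigD1 j) //= lerDl; apply: sumr_ge0 => i _; exact: sqc_ge0.
Qed.

Lemma mulmx_cols (B : 'M[C]_n) x : B *m x = \sum_j (x j 0) *: col j B.
Proof.
apply/matrixP => i k; rewrite ord1 mxE summxE; apply: eq_bigr => j _.
by rewrite !mxE mulrC.
Qed.

Lemma vnorm_mul_bound (B : 'M[C]_n) x : vnorm x = 1 ->
  vnorm (B *m x) <= \sum_j vnorm (col j B).
Proof.
move=> Hx; rewrite mulmx_cols; apply: le_trans; first exact: vnorm_sum.
apply: ler_sum => j _; rewrite vnormZ.
apply: ler_piMl; first exact: vnorm_ge0.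
have : nsq x = 1 by move: Hx; rewrite vnormE => /(congr1 (fun t => t ^+ 2));
  rewrite sqr_sqrtr ?nsq_ge0 // expr1n.
move=> Hn; rewrite -sqrtr1 ler_sqrt //; rewrite -Hn; exact: sqc_le_nsq.
Qed.


Lemma normalize x : x != 0 ->
  vnorm (((vnorm x)^-1)%:C%C *: x) = 1 /\ 0 < vnorm x.
Proof.
move=> Hx; have Hp : 0 < vnorm x.
  rewrite lt_def vnorm_ge0 andbT; apply/eqP => /vnorm_eq0 H; by rewrite H eqxx in Hx.
split=> //; rewrite vnormZR ger0_norm ?invr_ge0 ?vnorm_ge0 // mulVf //.
by rewrite gt_eqF.
Qed.

Lemma P1 (B : 'M[C]_n) (r : R) : 0 < r -> (r%:E < invnorm B)%E ->
  exists x, vnorm x = 1 /\ vnorm (B *m x) < r^-1.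
Proof.
move=> r0; rewrite /invnorm; case: ifP => Hu.
- rewrite /opnorm => /ereal_sup_gt [_ [y Hy <-]]; rewrite lte_fin => Hr.
  have z0 : invmx B *m y != 0.
    apply/eqP => Hz; move: Hr; rewrite Hz vnorm0 => /(lt_trans r0); by rewrite ltxx.
  have [Hz1 Hzp] := normalize _ z0.
  exists (((vnorm (invmx B *m y))^-1)%:C%C *: (invmx B *m y)); split => //.
  rewrite -scalemxAr mulmxA mulmxV // mul1mx vnormZR Hy mulr1.
  rewrite ger0_norm ?invr_ge0 ?vnorm_ge0 //.
  by rewrite ltf_pV2 ?posrE.
- move: Hu; rewrite unitmxE unitfE => /negbFE Hd _.
  have : \det B^T == 0 by rewrite det_tr.
  case/det0P => v v0 Hv.
  have x00 : v^T != 0 by apply: contra v0 => /eqP H; apply/eqP; rewrite -(trmxK v) H linear0.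
  have [Hz1 Hzp] := normalize _ x00.
  exists (((vnorm v^T)^-1)%:C%C *: v^T); split => //.
  rewrite -scalemxAr.
  have -> : B *m v^T = 0 by rewrite -(trmxK B) -trmx_mul Hv linear0.
  by rewrite scaler0 vnorm0 invr_gt0.
Qed.

Lemma P2 (B : 'M[C]_n) (r : R) : 0 < r ->
  (exists x, vnorm x = 1 /\ vnorm (B *m x) < r^-1) -> (r%:E < invnorm B)%E.
Proof.
move=> r0 [x [Hx HB]]; rewrite /invnorm; case: ifP => Hu; last exact: ltry.
set y := B *m x.
have y0 : y != 0.
  apply/eqP => Hy; have : x = invmx B *m y by rewrite /y mulKmx.
  by rewrite Hy mulmx0 => H; move: Hx; rewrite H vnorm0 => /eqP; rewrite eq_sym oner_eq0.
have [Hz1 Hzp] := normalize _ y0.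
apply: (@lt_le_trans _ _ ((vnorm y)^-1)%:E).
  rewrite lte_fin -(invrK r) ltf_pV2 ?posrE ?invr_gt0 //.
apply: ereal_sup_ubound; exists (((vnorm y)^-1)%:C%C *: y) => //.
rewrite -scalemxAr /y mulKmx // vnormZR Hx mulr1 ger0_norm // invr_ge0 vnorm_ge0 //.
Qed.

End VN.

Set Implicit Arguments.

Section Con.
Context {R : realType}.
Local Notation C := R[i].

Definition Ym nu d N : 'M[C]_#|{: Idx nu d N}| :=
  \matrix_(i, i') (if i == i' then ((if idx_a (enum_val i) then 1 else -1 : R)%:C)%C else 0).

Lemma vnormY nu d N (x : 'cV[C]_#|{: Idx nu d N}|) : vnorm (Ym nu d N *m x) = vnorm x.
Proof.
rewrite !vnormE /nsq; congr (Num.sqrt _); apply: eq_bigr => i _.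
rewrite mxE (bigD1 i) //= big1 ?addr0; last first.
  by move=> j /negbTE Hj; rewrite mxE eq_sym Hj mul0r.
rewrite mxE eqxx sqcM sqcR.
by case: (idx_a _); rewrite ?expr1n ?sqrrN ?expr1n mul1r.
Qed.

Lemma A_shift nu d (m : R) omegabar V0hat phat qhat eps lam t t' N j0 :
  A_trunc (nu:=nu) (d:=d) m omegabar V0hat phat qhat eps lam t N j0 =
  A_trunc m omegabar V0hat phat qhat eps lam t' N j0 + ((t - t')%:C)%C *: Ym nu d N.
Proof.
apply/matrixP => i i'; rewrite !mxE /A_entry /= (inj_eq enum_val_inj).
case: (i =P i') => [<-|_]; last by rewrite mulr0 addr0.
case: (idx_a _); rewrite !rmorphD !rmorphM ?rmorphN ?rmorph1 /=; ring.
Qed.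

Lemma lip n (A : R -> 'M[C]_n) (Y : 'M[C]_n)
  (hA : forall t t', A t = A t' + ((t - t')%:C)%C *: Y)
  (hY : forall x, vnorm (Y *m x) = vnorm x) x t t' :
  vnorm x = 1 -> vnorm (A t *m x) <= vnorm (A t' *m x) + `|t - t'|.
Proof.
move=> Hx; rewrite (hA t t') mulmxDl -scalemxAl.
apply: le_trans; first exact: vnormD.
by rewrite vnormZR hY Hx mulr1.
Qed.

End Con.

Unset Implicit Arguments.


Lemma itv_close (R : realType) (a del t s : R) :
  a <= t -> t < a + del -> a <= s -> s < a + del -> `|t - s| < del.
Proof. move=> *; rewrite ltr_norml; apply/andP; split; lra. Qed.

Lemma itv_order (R : realType) (L del t : R) (x y : nat) : 0 < del ->
  - L + x%:R * del <= t -> t < - L + y%:R * del + del -> (x < y.+1)%N.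
Proof.
move=> d0 Ha Hb; rewrite -(ltr_nat R) -(ltr_pM2r d0) -natr1 mulrDl mul1r; lra.
Qed.

Lemma final_ineq (R : realType) (K Np : R) : 0 < Np -> 0 <= K ->
  K <= 2 * (K * Np^-1) * Np.
Proof.
move=> Np0 K0; have -> : 2 * (K * Np^-1) * Np = 2 * K by field; rewrite gt_eqF.
lra.
Qed.

Theorem lemma6p4 (R : realType) (nu d : nat) (omegabar : 'rV[R]_nu)
    (tau eps0 m : R) (V0hat : 'rV[int]_d -> R[i])
    (phat qhat : R -> R -> 'rV[int]_nu -> 'rV[int]_d -> R[i]) :
  (1 <= nu)%N -> (1 <= d)%N ->
  (forall i, `|omegabar 0 i| <= 1) ->
  0 < tau -> 0 < eps0 ->
  (* V real, V_0 = V - m has zero average *)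
  V0hat 0 = 0 -> (forall j, V0hat (- j) = (V0hat j)^*) ->
  (* p real-valued *)
  (forall e lam l j, phat e lam (- l) (- j) = (phat e lam l j)^*) ->
  forall (N : nat) (j0 : 'rV[int]_d) (eps lam : R),
  (1 <= N)%N ->
  0 <= eps <= eps0 -> 2^-1 <= lam <= 3 / 2 ->
  let M := lebesgue_measure (B0_2 m omegabar V0hat phat qhat tau N j0 eps lam) in
  exists (K : nat) (a b : 'I_K -> R),
    ((K%:R)%:E <= 2%:E * M * (N%:R `^ tau)%:E)%E /\
    (forall q, a q <= b q /\ b q - a q <= N%:R `^ (- tau)) /\
    (forall theta, B0 m omegabar V0hat phat qhat tau N j0 eps lam theta ->
       exists q, a q <= theta <= b q).
Proof.
move=> _ _ _ tau0 _ _ _ _ N j0 eps lam N1 _ _ M.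
pose A t := A_trunc m omegabar V0hat phat qhat eps lam t N j0.
have hA : forall t t', A t = A t' + ((t - t')%:C)%C *: Ym nu d N by move=> t t'; exact: A_shift.
set Np := N%:R `^ tau.
set del := N%:R `^ (- tau).
have Np0 : 0 < Np by rewrite /Np powR_gt0 // ltr0n.
have delE : del = Np^-1 by rewrite /del powRN.
have del0 : 0 < del by rewrite delE invr_gt0.
have hB0 : forall t, B0 m omegabar V0hat phat qhat tau N j0 eps lam t ->
    exists x, vnorm x = 1 /\ vnorm (A t *m x) < del.
  move=> t Ht; rewrite delE; exact: (P1 _ _ Np0 Ht).
have hB02 : forall t x, vnorm x = 1 -> vnorm (A t *m x) < 2 * del ->
    B0_2 m omegabar V0hat phat qhat tau N j0 eps lam t.
  move=> t x Hx Hl; apply: (P2 (A t) (Np / 2)); first by rewrite divr_gt0.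
  exists x; split; first exact: Hx.
  by rewrite invf_div -delE.
have near : forall t t', B0 m omegabar V0hat phat qhat tau N j0 eps lam t ->
    `|t' - t| < del -> B0_2 m omegabar V0hat phat qhat tau N j0 eps lam t'.
  move=> t t' Ht Htt; have [x [Hx Hl]] := hB0 t Ht.
  apply: (hB02 t' x Hx); apply: le_lt_trans (lip A hA (fun z => vnormY z) x t' t Hx) _.
  by rewrite mulr2n mulrDl mul1r; apply: ltrD.
set L := \sum_j vnorm (col j (A 0)) + del.
have bound : forall t, B0 m omegabar V0hat phat qhat tau N j0 eps lam t -> `|t| < L.
  move=> t Ht; have [x [Hx Hl]] := hB0 t Ht.
  have -> : `|t| = vnorm (A t *m x - A 0 *m x).
    rewrite (hA t 0) mulmxDl addrAC subrr add0r -scalemxAl vnormZR.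
    by rewrite vnormY Hx mulr1 subr0.
  apply: le_lt_trans (vnormB _ _) _.
  rewrite /L [X in _ < X]addrC; apply: ltr_leD => //; exact: vnorm_mul_bound.
have L0 : 0 < L.
  rewrite /L; apply: ltr_wpDl => //; apply: sumr_ge0 => j _; exact: vnorm_ge0.
pose Kmax := (Num.trunc (2 * L / del)).+1.
pose lo (k : nat) := - L + k%:R * del.
pose P (k : 'I_Kmax) := `[< exists2 t, B0 m omegabar V0hat phat qhat tau N j0 eps lam t &
   lo k <= t < lo k + del >].
pose S := [set k | P k].
exists #|S|, (fun q : 'I_#|S| => lo (enum_val q)), (fun q : 'I_#|S| => lo (enum_val q) + del).
split; last split.
- pose F (q : 'I_#|S|) : set R := ([set` Interval (BLeft (lo (enum_val q))) (BLeft (lo (enum_val q) + del))])%classic.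
  have FB : forall q, (F q `<=` B0_2 m omegabar V0hat phat qhat tau N j0 eps lam)%classic.
    move=> q t; rewrite /F /= in_itv /= => /andP[Ht1 Ht2].
    have := enum_valP q; rewrite inE => /asboolP [th Hth /andP[H1 H2]].
    apply: (near th t Hth); exact: itv_close Ht1 Ht2 H1 H2.
  have Fm : forall q, lebesgue_measure (F q) = del%:E.
    move=> q; rewrite /F lebesgue_measure_itv /= lte_fin ltrDl del0 -EFinD.
    by rewrite addrAC subrr add0r.
  have triv : trivIset [set: 'I_#|S|] F.
    move=> i j _ _ [t [Hi Hj]]; move: Hi Hj; rewrite /F /= !in_itv /=.
    move=> /andP[Hi1 Hi2] /andP[Hj1 Hj2].
    have ltn_lo : forall a b : nat, lo a <= t -> t < lo b + del -> (a < b.+1)%N.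
      move=> a b; exact: itv_order del0.
    apply: enum_val_inj; apply: val_inj; apply/eqP; rewrite eqn_leq.
    apply/andP; split; rewrite -ltnS; exact: ltn_lo.
  have HU := measure_semi_additive_ord lebesgue_measure (fun q => measurable_itv _) triv
     (bigsetU_measurable _ (fun q _ => measurable_itv _)).
  have HK : ((#|S|%:R * del)%:E <= M)%E.
    apply: le_trans (_ : lebesgue_measure (\big[setU/set0]_(q < #|S|) F q)%classic <= M)%E.
      rewrite HU (eq_bigr (fun _ => del%:E)); last by move=> q _; exact: Fm.
      by rewrite sumEFin sumr_const card_ord mulr_natl.
    apply: le_outer_measure; apply: (big_ind (fun X => (X `<=` B0_2 m omegabar V0hat phat qhat tau N j0 eps lam)%classic)).
    - by [].
    - by move=> X Y HX HY t [/HX|/HY].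
    - by move=> q _; exact: FB.
  apply: le_trans (_ : ((2 * (#|S|%:R * del)) * Np)%:E <= _)%E.
    rewrite lee_fin delE; exact: final_ineq.
  rewrite EFinM; apply: lee_wpmul2r; first by rewrite lee_fin ltW.
  rewrite EFinM; apply: lee_wpmul2l; first by rewrite lee_fin.
  exact: HK.
- move=> q; split; first by rewrite lerDl ltW.
  by rewrite addrAC subrr add0r.
- move=> t Ht; have tL := bound t Ht.
  have tL0 : 0 <= (t + L) / del.
    by rewrite divr_ge0 ?(ltW del0) // -lerBlDr sub0r; move: tL; rewrite ltr_norml => /andP[/ltW].
  have [Hk1 Hk2] := andP (trunc_itv tL0).
  have kK : (Num.trunc ((t + L) / del) < Kmax)%N.
    rewrite /Kmax -(ltr_nat R); apply: le_lt_trans Hk1 _.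
    have H2L : 0 <= 2 * L / del by rewrite divr_ge0 ?mulr_ge0 ?(ltW del0) ?(ltW L0).
    apply: lt_trans (proj2 (andP (trunc_itv H2L))).
    rewrite ltr_pM2r ?invr_gt0 // mulr2n mulrDl mul1r ltrD2r.
    by move: tL; rewrite ltr_norml => /andP[].
  pose k := Ordinal kK.
  have Hlo : lo k <= t < lo k + del.
    rewrite /lo /=; apply/andP; split.
      by rewrite addrC -lerBrDr opprK -ler_pdivlMr.
    move: Hk2; rewrite ltr_pdivrMr // -natr1 mulrDl mul1r => H; lra.
  have kS : k \in S by rewrite inE; apply/asboolP; exists t.
  exists (enum_rank_in kS k); rewrite enum_rankK_in //.
  by case/andP: Hlo => -> /ltW ->.
Qed.
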